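(* Let $\mathfrak{g}$ be the following computad. - Objects: $\mathsf{0},\mathsf{1},\mathsf{2}$. - Arrows: $d\colon\mathsf{0}\to\mathsf{1}$, $d^0,d^1\colon\mathsf{1}\to\mathsf{2}$, and $s^0\colon\mathsf{2}\to\mathsf{1}$. - $2$-cells: $n_0\colon s^0 d^0\Rightarrow \mathrm{id}_{\mathsf{1}}$, $n_1\colon \mathrm{id}_{\mathsf{1}}\Rightarrow s^0 d^1$, and $\vartheta\colon d^1 d\Rightarrow d^0 d$. Then the locally thin $2$-category $\overline{\mathcal{M}_2}\mathcal{F}_2(\mathfrak{g})$ is not a free $2$-category. In particular, $\mathcal{F}_2(\mathfrak{g})$ and $\overline{\mathcal{L}_2}\mathcal{F}_2(\mathfrak{g})$ are not locally thin.
   Context: A computad consists of a small graph $G$ and a set of $2$-cells $\alpha$, each given by a pair of parallel morphisms $\alpha\colon f\Rightarrow g$ in the free category on $G$. $\mathcal{F}_2(\mathfrak{g})$ is the $2$-category freely generated by the computad $\mathfrak{g}$. Its underlying category is the free category on the graph. Its $2$-cells are freely generated by the given $2$-cells under vertical and horizontal composition and whiskering, subject only to the $2$-category axioms. A $2$-category is free if it is isomorphic to $\mathcal{F}_2(\mathfrak{h})$ for some computad $\mathfrak{h}$. $\overline{\mathcal{L}_2}$ is the left adjoint to the inclusion of locally groupoidal $2$-categories (all $2$-cells invertible) into $2$-categories; it freely inverts $2$-cells. $\overline{\mathcal{M}_2}$ is the left adjoint to the inclusion of locally thin $2$-categories (each hom-category has at most one $2$-cell between any two $1$-cells) into $2$-categories;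 it identifies parallel $2$-cells. *)

(* Defs.v *)
From Stdlib Require Import List.
Import ListNotations.

(** Composition of 1-cells and of 2-cells is written in diagrammatic order:
    [comp1 f g] is "f then g" (= g ∘ f), [vcomp a b] is "a then b",
    [hcomp a b] for a : f => f' (x -> y), b : g => g' (y -> z) is
    a * b : comp1 f g => comp1 f' g'.  The composition operations are total
    functions, but are only constrained (and only meaningful) on composable
    arguments. *)
Record TwoCat := {
  Ob : Type; Ar : Type; Ce : Type;
  src1 : Ar -> Ob; tgt1 : Ar -> Ob;
  src2 : Ce -> Ar; tgt2 : Ce -> Ar;
  id1 : Ob -> Ar; id2 : Ar -> Ce;
  comp1 : Ar -> Ar -> Ar;
  vcomp : Ce -> Ce -> Ce;
  hcomp : Ce -> Ce -> Ce;
  glob_src : forall a, src1 (src2 a) = src1 (tgt2 a);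
  glob_tgt : forall a, tgt1 (src2 a) = tgt1 (tgt2 a);
  id1_src : forall x, src1 (id1 x) = x;
  id1_tgt : forall x, tgt1 (id1 x) = x;
  comp1_src : forall f g, tgt1 f = src1 g -> src1 (comp1 f g) = src1 f;
  comp1_tgt : forall f g, tgt1 f = src1 g -> tgt1 (comp1 f g) = tgt1 g;
  comp1_idl : forall f, comp1 (id1 (src1 f)) f = f;
  comp1_idr : forall f, comp1 f (id1 (tgt1 f)) = f;
  comp1_assoc : forall f g h, tgt1 f = src1 g -> tgt1 g = src1 h ->
      comp1 (comp1 f g) h = comp1 f (comp1 g h);
  id2_src : forall f, src2 (id2 f) = f;
  id2_tgt : forall f, tgt2 (id2 f) = f;
  vcomp_src : forall a b, tgt2 a = src2 b -> src2 (vcomp a b) = src2 a;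
  vcomp_tgt : forall a b, tgt2 a = src2 b -> tgt2 (vcomp a b) = tgt2 b;
  vcomp_idl : forall a, vcomp (id2 (src2 a)) a = a;
  vcomp_idr : forall a, vcomp a (id2 (tgt2 a)) = a;
  vcomp_assoc : forall a b c, tgt2 a = src2 b -> tgt2 b = src2 c ->
      vcomp (vcomp a b) c = vcomp a (vcomp b c);
  hcomp_src : forall a b, tgt1 (src2 a) = src1 (src2 b) ->
      src2 (hcomp a b) = comp1 (src2 a) (src2 b);
  hcomp_tgt : forall a b, tgt1 (src2 a) = src1 (src2 b) ->
      tgt2 (hcomp a b) = comp1 (tgt2 a) (tgt2 b);
  hcomp_id2 : forall f g, tgt1 f = src1 g ->
      hcomp (id2 f) (id2 g) = id2 (comp1 f g);
  hcomp_idl : forall a, hcomp (id2 (id1 (src1 (src2 a)))) a = a;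
  hcomp_idr : forall a, hcomp a (id2 (id1 (tgt1 (src2 a)))) = a;
  hcomp_assoc : forall a b c,
      tgt1 (src2 a) = src1 (src2 b) -> tgt1 (src2 b) = src1 (src2 c) ->
      hcomp (hcomp a b) c = hcomp a (hcomp b c);
  interchange : forall a a' b b',
      tgt2 a = src2 a' -> tgt2 b = src2 b' -> tgt1 (src2 a) = src1 (src2 b) ->
      hcomp (vcomp a a') (vcomp b b') = vcomp (hcomp a b) (hcomp a' b')
}.

Arguments src1 {_} _. Arguments tgt1 {_} _. Arguments src2 {_} _.
Arguments tgt2 {_} _. Arguments id1 {_} _. Arguments id2 {_} _.
Arguments comp1 {_} _ _. Arguments vcomp {_} _ _. Arguments hcomp {_} _ _.

Record TwoFun (C D : TwoCat) := {
  fO : Ob C -> Ob D; fA : Ar C -> Ar D; fC : Ce C -> Ce D;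
  fun_src1 : forall f, src1 (fA f) = fO (src1 f);
  fun_tgt1 : forall f, tgt1 (fA f) = fO (tgt1 f);
  fun_src2 : forall a, src2 (fC a) = fA (src2 a);
  fun_tgt2 : forall a, tgt2 (fC a) = fA (tgt2 a);
  fun_id1 : forall x, fA (id1 x) = id1 (fO x);
  fun_id2 : forall f, fC (id2 f) = id2 (fA f);
  fun_comp1 : forall f g, tgt1 f = src1 g -> fA (comp1 f g) = comp1 (fA f) (fA g);
  fun_vcomp : forall a b, tgt2 a = src2 b -> fC (vcomp a b) = vcomp (fC a) (fC b);
  fun_hcomp : forall a b, tgt1 (src2 a) = src1 (src2 b) ->
      fC (hcomp a b) = hcomp (fC a) (fC b)
}.
Arguments fO {_ _} _ _. Arguments fA {_ _} _ _. Arguments fC {_ _} _ _.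

Definition fun_eq {C D : TwoCat} (F G : TwoFun C D) : Prop :=
  (forall x, fO F x = fO G x) /\ (forall f, fA F f = fA G f) /\
  (forall a, fC F a = fC G a).

Definition comp_eq {B C D : TwoCat} (F : TwoFun B C) (H : TwoFun C D)
  (G : TwoFun B D) : Prop :=
  (forall x, fO H (fO F x) = fO G x) /\ (forall f, fA H (fA F f) = fA G f) /\
  (forall a, fC H (fC F a) = fC G a).

Definition iso_TwoCat (C D : TwoCat) : Prop :=
  exists (F : TwoFun C D) (G : TwoFun D C),
    (forall x, fO G (fO F x) = x) /\ (forall f, fA G (fA F f) = f) /\
    (forall a, fC G (fC F a) = a) /\
    (forall y, fO F (fO G y) = y) /\ (forall g, fA F (fA G g) = g) /\
    (forall b, fC F (fC G b) = b).

Definition locally_thin (C : TwoCat) : Prop :=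
  forall a b : Ce C, src2 a = src2 b -> tgt2 a = tgt2 b -> a = b.

Definition locally_groupoidal (C : TwoCat) : Prop :=
  forall a : Ce C, exists b : Ce C,
    src2 b = tgt2 a /\ tgt2 b = src2 a /\
    vcomp a b = id2 (src2 a) /\ vcomp b a = id2 (tgt2 a).

(** Reflections: [q : C -> M] exhibits [M] as the free locally thin
    (resp. locally groupoidal) 2-category on [C], i.e. [M = \bar M_2 C]
    (resp. [\bar L_2 C]) with unit [q]. *)
Definition reflection_along (P : TwoCat -> Prop) (C M : TwoCat)
  (q : TwoFun C M) : Prop :=
  P M /\
  forall (X : TwoCat), P X -> forall G : TwoFun C X,
    (exists H : TwoFun M X, comp_eq q H G) /\
    (forall H1 H2 : TwoFun M X, comp_eq q H1 G -> comp_eq q H2 G -> fun_eq H1 H2).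

Definition is_M2bar (C M : TwoCat) (q : TwoFun C M) : Prop :=
  reflection_along locally_thin C M q.
Definition is_L2bar (C L : TwoCat) (q : TwoFun C L) : Prop :=
  reflection_along locally_groupoidal C L q.

(** * Computads.  A path in the free category on the graph is a start
    vertex together with a list of composable edges (diagrammatic order). *)
Fixpoint path_valid {V E : Type} (es et : E -> V) (v : V) (l : list E) : Prop :=
  match l with
  | [] => True
  | e :: l' => es e = v /\ path_valid es et (et e) l'
  end.

Fixpoint path_end {V E : Type} (et : E -> V) (v : V) (l : list E) : V :=
  match l with
  | [] => v
  | e :: l' => path_end et (et e) l'
  end.

Record Computad := {
  cV : Type; cE : Type;
  csrc : cE -> cV; ctgt : cE -> cV;
  cT : Type;
  cTsrc : cT -> cV * list cE;
  cTtgt : cT -> cV * list cE;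
  cTsrc_valid : forall t, path_valid csrc ctgt (fst (cTsrc t)) (snd (cTsrc t));
  cTtgt_valid : forall t, path_valid csrc ctgt (fst (cTtgt t)) (snd (cTtgt t));
  cT_par_src : forall t, fst (cTsrc t) = fst (cTtgt t);
  cT_par_tgt : forall t, path_end ctgt (fst (cTsrc t)) (snd (cTsrc t))
                        = path_end ctgt (fst (cTtgt t)) (snd (cTtgt t))
}.

Definition eval_path {V E : Type} (C : TwoCat) (dO : V -> Ob C) (dA : E -> Ar C)
  (p : V * list E) : Ar C :=
  fold_left (fun acc e => comp1 acc (dA e)) (snd p) (id1 (dO (fst p))).

(** A diagram of shape [g] in [C], i.e. a computad morphism from [g] to the
    underlying computad of [C]. *)
Record Diagram (g : Computad) (C : TwoCat) := {
  dO : cV g -> Ob C; dA : cE g -> Ar C; dC : cT g -> Ce C;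
  dA_src : forall e, src1 (dA e) = dO (csrc g e);
  dA_tgt : forall e, tgt1 (dA e) = dO (ctgt g e);
  dC_src : forall t, src2 (dC t) = eval_path C dO dA (cTsrc g t);
  dC_tgt : forall t, tgt2 (dC t) = eval_path C dO dA (cTtgt g t)
}.
Arguments dO {_ _} _ _. Arguments dA {_ _} _ _. Arguments dC {_ _} _ _.

Definition diag_comp_eq {g : Computad} {C X : TwoCat} (D : Diagram g C)
  (H : TwoFun C X) (D' : Diagram g X) : Prop :=
  (forall v, fO H (dO D v) = dO D' v) /\ (forall e, fA H (dA D e) = dA D' e) /\
  (forall t, fC H (dC D t) = dC D' t).

(** [D] exhibits [C] as the 2-category freely generated by [g],
    i.e. [C = F_2(g)] (universal property of the left adjoint). *)
Definition free_on (g : Computad) (C : TwoCat) (D : Diagram g C) : Prop :=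
  forall (X : TwoCat) (D' : Diagram g X),
    (exists H : TwoFun C X, diag_comp_eq D H D') /\
    (forall H1 H2 : TwoFun C X, diag_comp_eq D H1 D' -> diag_comp_eq D H2 D' ->
       fun_eq H1 H2).

Definition is_free (C : TwoCat) : Prop :=
  exists (h : Computad) (F : TwoCat) (D : Diagram h F),
    free_on h F D /\ iso_TwoCat F C.

Inductive gV := g0 | g1 | g2.
Inductive gE := e_d | e_d0 | e_d1 | e_s0.
Inductive gT := t_n0 | t_n1 | t_theta.

Definition gE_src (e : gE) : gV :=
  match e with e_d => g0 | e_d0 => g1 | e_d1 => g1 | e_s0 => g2 end.
Definition gE_tgt (e : gE) : gV :=
  match e with e_d => g1 | e_d0 => g2 | e_d1 => g2 | e_s0 => g1 end.

(* n_0 : s^0 d^0 => id_1 ;  n_1 : id_1 => s^0 d^1 ;  theta : d^1 d => d^0 d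
   (paths are in diagrammatic order, so s^0 d^0 = [d^0; s^0]). *)
Definition gT_src (t : gT) : gV * list gE :=
  match t with
  | t_n0 => (g1, [e_d0; e_s0])
  | t_n1 => (g1, [])
  | t_theta => (g0, [e_d; e_d1])
  end.
Definition gT_tgt (t : gT) : gV * list gE :=
  match t with
  | t_n0 => (g1, [])
  | t_n1 => (g1, [e_d1; e_s0])
  | t_theta => (g0, [e_d; e_d0])
  end.

Lemma gT_src_valid : forall t, path_valid gE_src gE_tgt (fst (gT_src t)) (snd (gT_src t)).
Proof. destruct t; simpl; repeat split. Qed.
Lemma gT_tgt_valid : forall t, path_valid gE_src gE_tgt (fst (gT_tgt t)) (snd (gT_tgt t)).
Proof. destruct t; simpl; repeat split. Qed.
Lemma gT_par_src : forall t, fst (gT_src t) = fst (gT_tgt t).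
Proof. destruct t; reflexivity. Qed.
Lemma gT_par_tgt : forall t, path_end gE_tgt (fst (gT_src t)) (snd (gT_src t))
                          = path_end gE_tgt (fst (gT_tgt t)) (snd (gT_tgt t)).
Proof. destruct t; reflexivity. Qed.

Definition frak_g : Computad :=
  {| cV := gV; cE := gE; csrc := gE_src; ctgt := gE_tgt; cT := gT;
     cTsrc := gT_src; cTtgt := gT_tgt;
     cTsrc_valid := gT_src_valid; cTtgt_valid := gT_tgt_valid;
     cT_par_src := gT_par_src; cT_par_tgt := gT_par_tgt |}.

(* Main.v *)
Require Import Defs.
From Stdlib Require Import List Classical ClassicalEpsilon ProofIrrelevance Lia.
Import ListNotations.

Record wcell (C : TwoCat) (b : bool) := mkW {
  ws : Ar C; wt : Ar C; wn : nat;
  wp1 : src1 ws = src1 wt; wp2 : tgt1 ws = tgt1 wt;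
  wok : b = true /\ wn = 0 -> ws = wt }.
Arguments mkW {C b}. Arguments ws {C b}. Arguments wt {C b}. Arguments wn {C b}.
Arguments wp1 {C b}. Arguments wp2 {C b}. Arguments wok {C b}.

Lemma wcell_eq C b (x y : wcell C b) : ws x = ws y -> wt x = wt y -> wn x = wn y -> x = y.
Proof.
  destruct x, y; simpl; intros; subst.
  assert (wp3 = wp5) by apply proof_irrelevance.
  assert (wp4 = wp6) by apply proof_irrelevance.
  assert (wok0 = wok1) by apply proof_irrelevance. subst; reflexivity.
Qed.

Definition wid2 C b (f : Ar C) : wcell C b :=
  mkW f f 0 eq_refl eq_refl (fun _ => eq_refl).

Lemma vp1 C b (x y : wcell C b) : wt x = ws y -> src1 (ws x) = src1 (wt y).
Proof. intro e. rewrite (wp1 x), e. apply wp1. Qed.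
Lemma vp2 C b (x y : wcell C b) : wt x = ws y -> tgt1 (ws x) = tgt1 (wt y).
Proof. intro e. rewrite (wp2 x), e. apply wp2. Qed.
Lemma vok C b (x y : wcell C b) : wt x = ws y -> b = true /\ wn x + wn y = 0 -> ws x = wt y.
Proof. intros e [h1 h2]. rewrite (wok x) by (split; [auto|lia]). rewrite e. apply wok. split; [auto|lia]. Qed.

Definition wvcomp C b (x y : wcell C b) : wcell C b :=
  match excluded_middle_informative (wt x = ws y) with
  | left e => mkW (ws x) (wt y) (wn x + wn y) (vp1 C b x y e) (vp2 C b x y e) (vok C b x y e)
  | right _ => x end.

Lemma hcond C b (x y : wcell C b) : tgt1 (ws x) = src1 (ws y) -> tgt1 (wt x) = src1 (wt y).
Proof. intro e. rewrite <- (wp2 x), e. apply wp1. Qed.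
Lemma hp1 C b (x y : wcell C b) : tgt1 (ws x) = src1 (ws y) ->
  src1 (comp1 (ws x) (ws y)) = src1 (comp1 (wt x) (wt y)).
Proof. intro e. rewrite comp1_src by auto. rewrite comp1_src by (apply hcond; auto). apply wp1. Qed.
Lemma hp2 C b (x y : wcell C b) : tgt1 (ws x) = src1 (ws y) ->
  tgt1 (comp1 (ws x) (ws y)) = tgt1 (comp1 (wt x) (wt y)).
Proof. intro e. rewrite comp1_tgt by auto. rewrite comp1_tgt by (apply hcond; auto). apply wp2. Qed.
Lemma hok C b (x y : wcell C b) : b = true /\ wn x + wn y = 0 ->
  comp1 (ws x) (ws y) = comp1 (wt x) (wt y).
Proof. intros [h1 h2]. rewrite (wok x), (wok y) by (split; [auto|lia]). reflexivity. Qed.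

Definition whcomp C b (x y : wcell C b) : wcell C b :=
  match excluded_middle_informative (tgt1 (ws x) = src1 (ws y)) with
  | left e => mkW (comp1 (ws x) (ws y)) (comp1 (wt x) (wt y)) (wn x + wn y)
                  (hp1 C b x y e) (hp2 C b x y e) (hok C b x y)
  | right _ => x end.

Lemma wv_s C b x y : ws (wvcomp C b x y) = ws x.
Proof. unfold wvcomp; destruct excluded_middle_informative; reflexivity. Qed.
Lemma wv_t C b x y : wt x = ws y -> wt (wvcomp C b x y) = wt y.
Proof. unfold wvcomp; destruct excluded_middle_informative; simpl; tauto. Qed.
Lemma wv_n C b x y : wt x = ws y -> wn (wvcomp C b x y) = wn x + wn y.
Proof. unfold wvcomp; destruct excluded_middle_informative; simpl; tauto. Qed.
Lemma wh_s C b x y : tgt1 (ws x) = src1 (ws y) -> ws (whcomp C b x y) = comp1 (ws x) (ws y).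
Proof. unfold whcomp; destruct excluded_middle_informative; simpl; tauto. Qed.
Lemma wh_t C b x y : tgt1 (ws x) = src1 (ws y) -> wt (whcomp C b x y) = comp1 (wt x) (wt y).
Proof. unfold whcomp; destruct excluded_middle_informative; simpl; tauto. Qed.
Lemma wh_n C b x y : tgt1 (ws x) = src1 (ws y) -> wn (whcomp C b x y) = wn x + wn y.
Proof. unfold whcomp; destruct excluded_middle_informative; simpl; tauto. Qed.

Definition WC (C : TwoCat) (b : bool) : TwoCat.
Proof.
  refine {| Ob := Ob C; Ar := Ar C; Ce := wcell C b;
    src1 := @src1 C; tgt1 := @tgt1 C; src2 := ws; tgt2 := wt;
    id1 := @id1 C; id2 := wid2 C b; comp1 := @comp1 C;
    vcomp := wvcomp C b; hcomp := whcomp C b |}.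
  - apply wp1.
  - apply wp2.
  - apply id1_src.
  - apply id1_tgt.
  - apply comp1_src.
  - apply comp1_tgt.
  - apply comp1_idl.
  - apply comp1_idr.
  - apply comp1_assoc.
  - reflexivity.
  - reflexivity.
  - intros; apply wv_s.
  - intros; apply wv_t; auto.
  - intros a. apply wcell_eq; [rewrite wv_s; reflexivity | apply wv_t; reflexivity | rewrite wv_n; reflexivity].
  - intros a. apply wcell_eq; [rewrite wv_s; reflexivity | rewrite wv_t; reflexivity | rewrite wv_n; simpl; [lia|reflexivity]].
  - intros a x c e1 e2. apply wcell_eq.
    + rewrite !wv_s. reflexivity.
    + rewrite wv_t by (rewrite wv_t; auto). rewrite wv_t. rewrite wv_t; auto. rewrite wv_s; auto.
    + rewrite wv_n by (rewrite wv_t; auto). rewrite wv_n by auto.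
      rewrite wv_n by (rewrite wv_s; auto). rewrite wv_n by auto. lia.
  - intros; apply wh_s; auto.
  - intros; apply wh_t; auto.
  - intros f g e. apply wcell_eq; simpl; rewrite ?wh_s, ?wh_t, ?wh_n; auto.
  - intros a. assert (e : tgt1 (ws (wid2 C b (id1 (src1 (ws a))))) = src1 (ws a)) by apply id1_tgt.
    apply wcell_eq; rewrite ?wh_s, ?wh_t, ?wh_n by exact e; simpl.
    + apply comp1_idl.
    + rewrite (wp1 a). apply comp1_idl.
    + reflexivity.
  - intros a. assert (e : tgt1 (ws a) = src1 (ws (wid2 C b (id1 (tgt1 (ws a)))))) by (symmetry; apply id1_src).
    apply wcell_eq; rewrite ?wh_s, ?wh_t, ?wh_n by exact e; simpl.
    + apply comp1_idr.
    + rewrite (wp2 a). apply comp1_idr.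
    + lia.
  - intros a x c e1 e2.
    assert (e3 : tgt1 (ws (whcomp C b a x)) = src1 (ws c)) by (rewrite wh_s by auto; rewrite comp1_tgt; auto).
    assert (e4 : tgt1 (ws a) = src1 (ws (whcomp C b x c))) by (rewrite wh_s by auto; rewrite comp1_src; auto).
    pose proof (hcond C b a x e1). pose proof (hcond C b x c e2).
    apply wcell_eq.
    + rewrite (wh_s C b (whcomp C b a x) c e3). rewrite (wh_s C b a (whcomp C b x c) e4). rewrite !wh_s by auto. apply comp1_assoc; auto.
    + rewrite (wh_t C b (whcomp C b a x) c e3). rewrite (wh_t C b a (whcomp C b x c) e4). rewrite !wh_t by auto. apply comp1_assoc; auto.
    + rewrite (wh_n C b (whcomp C b a x) c e3). rewrite (wh_n C b a (whcomp C b x c) e4). rewrite !wh_n by auto. lia.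
  - intros a a' x x' e1 e2 e3.
    assert (e4 : tgt1 (ws (wvcomp C b a a')) = src1 (ws (wvcomp C b x x'))) by (rewrite !wv_s; auto).
    assert (e5 : tgt1 (ws a') = src1 (ws x')).
    { rewrite <- e1, <- e2, <- (wp2 a), <- (wp1 x). auto. }
    assert (e6 : wt (whcomp C b a x) = ws (whcomp C b a' x')).
    { rewrite wh_t by auto. rewrite wh_s by auto. rewrite e1, e2. reflexivity. }
    apply wcell_eq.
    + rewrite (wh_s C b _ _ e4). rewrite wv_s, !wv_s. rewrite wh_s by auto. reflexivity.
    + rewrite (wh_t C b _ _ e4). rewrite (wv_t C b _ _ e6). rewrite !wv_t by auto. rewrite wh_t by auto. reflexivity.
    + rewrite (wh_n C b _ _ e4). rewrite (wv_n C b _ _ e6). rewrite !wv_n by auto. rewrite !wh_n by auto. lia.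
Defined.
Definition tf_comp {B C D : TwoCat} (F : TwoFun B C) (G : TwoFun C D) : TwoFun B D.
Proof.
  refine {| fO := fun x => fO G (fO F x); fA := fun f => fA G (fA F f);
            fC := fun a => fC G (fC F a) |}.
  - intros; rewrite fun_src1, fun_src1; reflexivity.
  - intros; rewrite fun_tgt1, fun_tgt1; reflexivity.
  - intros; rewrite fun_src2, fun_src2; reflexivity.
  - intros; rewrite fun_tgt2, fun_tgt2; reflexivity.
  - intros; rewrite fun_id1, fun_id1; reflexivity.
  - intros; rewrite fun_id2, fun_id2; reflexivity.
  - intros f g e. rewrite fun_comp1 by auto. apply fun_comp1. rewrite fun_tgt1, fun_src1, e; reflexivity.
  - intros a c e. rewrite fun_vcomp by auto. apply fun_vcomp. rewrite fun_tgt2, fun_src2, e; reflexivity.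
  - intros a c e. rewrite fun_hcomp by auto. apply fun_hcomp.
    rewrite fun_src2, fun_src2, fun_tgt1, fun_src1, e; reflexivity.
Defined.

Lemma false_abs {X : Prop} (n : nat) : false = true /\ n = 0 -> X.
Proof. intros [h _]; discriminate. Qed.

Definition Pw (C : TwoCat) : TwoFun (WC C true) (WC C false).
Proof.
  refine (@Build_TwoFun (WC C true) (WC C false) (fun x => x) (fun f => f)
            (fun x : wcell C true => mkW (b:=false) (ws x) (wt x) 0 (wp1 x) (wp2 x) (false_abs 0)) _ _ _ _ _ _ _ _ _);
   try reflexivity.
  - intros f. apply wcell_eq; reflexivity.
  - intros a c e. apply wcell_eq; simpl.
    + rewrite !wv_s; reflexivity.
    + rewrite !wv_t; auto.
    + rewrite wv_n; auto.
  - intros a c e. apply wcell_eq; simpl.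
    + rewrite !wh_s; auto.
    + rewrite !wh_t; auto.
    + rewrite wh_n; auto.
Defined.

Definition Jw (C : TwoCat) : TwoFun C (WC C false).
Proof.
  refine (@Build_TwoFun C (WC C false) (fun x => x) (fun f => f)
            (fun x : Ce C => mkW (b:=false) (src2 x) (tgt2 x) 0 (glob_src C x) (glob_tgt C x) (false_abs 0)) _ _ _ _ _ _ _ _ _);
   try reflexivity.
  - intros f. apply wcell_eq; simpl; [apply id2_src | apply id2_tgt | reflexivity].
  - intros a c e. apply wcell_eq; simpl.
    + rewrite wv_s, vcomp_src; auto.
    + rewrite wv_t, vcomp_tgt; auto.
    + rewrite wv_n; auto.
  - intros a c e. apply wcell_eq; simpl.
    + rewrite wh_s, hcomp_src; auto.
    + rewrite wh_t, hcomp_tgt; auto.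
    + rewrite wh_n; auto.
Defined.

Lemma one_abs (C : TwoCat) (x y : Ar C) : true = true /\ 1 = 0 -> x = y.
Proof. intros [_ h]; discriminate. Qed.

Definition D1 (h : Computad) (C : TwoCat) (D : Diagram h C) : Diagram h (WC C true).
Proof.
  refine (@Build_Diagram h (WC C true) (dO D) (dA D)
            (fun t => mkW (b:=true) (src2 (dC D t)) (tgt2 (dC D t)) 1
                     (glob_src C _) (glob_tgt C _) (one_abs C _ _)) _ _ _ _).
  - intro e; exact (dA_src h C D e). - intro e; exact (dA_tgt h C D e).
  - intro t; exact (dC_src h C D t). - intro t; exact (dC_tgt h C D t).
Defined.

Definition D2 (h : Computad) (C : TwoCat) (D : Diagram h C) : Diagram h (WC C false).
Proof.
  refine (@Build_Diagram h (WC C false) (dO D) (dA D)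
            (fun t => mkW (b:=false) (src2 (dC D t)) (tgt2 (dC D t)) 0
                     (glob_src C _) (glob_tgt C _) (false_abs 0)) _ _ _ _).
  - intro e; exact (dA_src h C D e). - intro e; exact (dA_tgt h C D e).
  - intro t; exact (dC_src h C D t). - intro t; exact (dC_tgt h C D t).
Defined.

Lemma free_endo (h : Computad) (C : TwoCat) (D : Diagram h C) : free_on h C D ->
  forall a c : Ce C, tgt2 a = src2 c -> vcomp a c = id2 (src2 a) -> src2 a = tgt2 a.
Proof.
  intros Hf a c e1 e2.
  destruct (Hf _ (D1 h C D)) as [[H [HO [HA HC]]] _].
  destruct (Hf _ (D2 h C D)) as [_ U].
  assert (U1 : diag_comp_eq D (tf_comp H (Pw C)) (D2 h C D)).
  { split; [|split]; intros; simpl.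
    - apply HO. - apply HA.
    - rewrite HC. apply wcell_eq; reflexivity. }
  assert (U2 : diag_comp_eq D (Jw C) (D2 h C D)).
  { split; [|split]; intros; simpl; try reflexivity. }
  destruct (U _ _ U1 U2) as [_ [UA _]].
  assert (HA' : forall f, fA H f = f) by (intro f; exact (UA f)).
  assert (es : ws (fC H a) = src2 a) by (rewrite <- (HA' (src2 a)); exact (fun_src2 _ _ H a)).
  assert (et : wt (fC H a) = tgt2 a) by (rewrite <- (HA' (tgt2 a)); exact (fun_tgt2 _ _ H a)).
  assert (es' : ws (fC H c) = src2 c) by (rewrite <- (HA' (src2 c)); exact (fun_src2 _ _ H c)).
  assert (ev := fun_vcomp _ _ H a c e1).
  rewrite e2, fun_id2 in ev.
  assert (en := f_equal wn ev). simpl in en.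
  rewrite wv_n in en by (rewrite et, es'; auto).
  rewrite <- es, <- et. apply wok. split; [reflexivity | lia].
Qed.

Lemma free_thin (M : TwoCat) : is_free M -> locally_thin M ->
  forall a c : Ce M, tgt2 a = src2 c -> tgt2 c = src2 a -> src2 a = tgt2 a.
Proof.
  intros [h [F' [D' [Hf [Fi [Gi [i1 [i2 [i3 [i4 [i5 i6]]]]]]]]]]] Ht a c e1 e2.
  assert (ev : vcomp a c = id2 (src2 a)).
  { apply Ht.
    - rewrite vcomp_src by auto. rewrite id2_src. reflexivity.
    - rewrite vcomp_tgt by auto. rewrite id2_tgt. auto. }
  assert (E : src2 (fC Gi a) = tgt2 (fC Gi a)).
  { apply (free_endo h F' D' Hf _ (fC Gi c)).
    - rewrite fun_tgt2, fun_src2, e1. reflexivity.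
    - rewrite <- fun_vcomp by auto. rewrite ev, fun_id2, fun_src2. reflexivity. }
  rewrite fun_src2, fun_tgt2 in E.
  rewrite <- (i5 (src2 a)), <- (i5 (tgt2 a)), E. reflexivity.
Qed.

Definition Xn : TwoCat.
Proof.
  refine {| Ob := unit; Ar := nat; Ce := (nat * nat)%type;
    src1 := fun _ => tt; tgt1 := fun _ => tt; src2 := fst; tgt2 := snd;
    id1 := fun _ => 0; id2 := fun f => (f, f); comp1 := Nat.add;
    vcomp := fun a b => (fst a, snd b);
    hcomp := fun a b => (fst a + fst b, snd a + snd b) |};
  intros; repeat match goal with x : (nat * nat)%type |- _ => destruct x end;
  repeat match goal with x : unit |- _ => destruct x end;
  simpl in *; try reflexivity; try lia; try (f_equal; lia).
Defined.

Definition Dn : Diagram frak_g Xn.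
Proof.
  refine (@Build_Diagram frak_g Xn (fun _ => tt)
     (fun e => match e with e_s0 => 1 | _ => 0 end)
     (fun t => (eval_path Xn (fun _ => tt) (fun e => match e with e_s0 => 1 | _ => 0 end) (gT_src t),
                eval_path Xn (fun _ => tt) (fun e => match e with e_s0 => 1 | _ => 0 end) (gT_tgt t)))
     _ _ _ _); intros; reflexivity.
Defined.

Lemma Xn_thin : locally_thin Xn.
Proof. intros [a b] [c d]; simpl; intros; subst; reflexivity. Qed.

From Stdlib Require Import ZArith.

Definition XZ : TwoCat.
Proof.
  refine {| Ob := unit; Ar := unit; Ce := Z;
    src1 := fun _ => tt; tgt1 := fun _ => tt; src2 := fun _ => tt; tgt2 := fun _ => tt;
    id1 := fun _ => tt; id2 := fun _ => 0%Z; comp1 := fun _ _ => tt;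
    vcomp := Z.add; hcomp := Z.add |};
  intros; repeat match goal with x : unit |- _ => destruct x end;
  simpl in *; try reflexivity; try lia.
Defined.

Definition DZ : Diagram frak_g XZ.
Proof.
  refine (@Build_Diagram frak_g XZ (fun _ => tt) (fun _ => tt)
     (fun t => match t with t_theta => 1%Z | _ => 0%Z end) _ _ _ _);
  intros; try reflexivity; destruct t; reflexivity.
Defined.

Lemma XZ_grp : locally_groupoidal XZ.
Proof. intro a. exists (- a)%Z. simpl. repeat split; lia. Qed.

Lemma idl' (C : TwoCat) (x : Ob C) f : src1 f = x -> comp1 (id1 x) f = f.
Proof. intro e; subst; apply comp1_idl. Qed.
Lemma idr' (C : TwoCat) (x : Ob C) f : tgt1 f = x -> comp1 f (id1 x) = f.
Proof. intro e; subst; apply comp1_idr. Qed.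

Theorem mainTheorem17 :
  forall (F : TwoCat) (D : Diagram frak_g F), free_on frak_g F D ->
    (forall (M : TwoCat) (q : TwoFun F M), is_M2bar F M q -> ~ is_free M) /\
    ~ locally_thin F /\
    (forall (L : TwoCat) (r : TwoFun F L), is_L2bar F L r -> ~ locally_thin L).
Proof.
  intros F D Hf.
  set (x0 := dO D g0). set (x1 := dO D g1). set (x2 := dO D g2).
  set (d := dA D e_d). set (d0 := dA D e_d0). set (d1 := dA D e_d1). set (s := dA D e_s0).
  assert (Sd : src1 d = x0) by exact (dA_src _ _ D e_d).
  assert (Td : tgt1 d = x1) by exact (dA_tgt _ _ D e_d).
  assert (Sd0 : src1 d0 = x1) by exact (dA_src _ _ D e_d0).
  assert (Td0 : tgt1 d0 = x2) by exact (dA_tgt _ _ D e_d0).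
  assert (Sd1 : src1 d1 = x1) by exact (dA_src _ _ D e_d1).
  assert (Td1 : tgt1 d1 = x2) by exact (dA_tgt _ _ D e_d1).
  assert (Ss : src1 s = x2) by exact (dA_src _ _ D e_s0).
  assert (Ts : tgt1 s = x1) by exact (dA_tgt _ _ D e_s0).
  set (N0 := dC D t_n0). set (N1 := dC D t_n1). set (Th := dC D t_theta).
  assert (SN0 : src2 N0 = comp1 d0 s).
  { unfold N0; rewrite (dC_src _ _ D t_n0). change (comp1 (comp1 (id1 x1) d0) s = comp1 d0 s). rewrite (idl' F x1 d0 Sd0). reflexivity. }
  assert (TN0 : tgt2 N0 = id1 x1) by (unfold N0; rewrite (dC_tgt _ _ D t_n0); reflexivity).
  assert (SN1 : src2 N1 = id1 x1) by (unfold N1; rewrite (dC_src _ _ D t_n1); reflexivity).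
  assert (TN1 : tgt2 N1 = comp1 d1 s).
  { unfold N1; rewrite (dC_tgt _ _ D t_n1). change (comp1 (comp1 (id1 x1) d1) s = comp1 d1 s). rewrite (idl' F x1 d1 Sd1). reflexivity. }
  assert (STh : src2 Th = comp1 d d1).
  { unfold Th; rewrite (dC_src _ _ D t_theta). change (comp1 (comp1 (id1 x0) d) d1 = comp1 d d1). rewrite (idl' F x0 d Sd). reflexivity. }
  assert (TTh : tgt2 Th = comp1 d d0).
  { unfold Th; rewrite (dC_tgt _ _ D t_theta). change (comp1 (comp1 (id1 x0) d) d0 = comp1 d d0). rewrite (idl' F x0 d Sd). reflexivity. }
  set (al := hcomp (id2 d) N1).
  assert (cal : tgt1 (src2 (id2 d)) = src1 (src2 N1)) by (rewrite id2_src, SN1, id1_src; auto).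
  assert (Sal : src2 al = d) by (unfold al; rewrite hcomp_src, id2_src, SN1 by auto; apply idr'; auto).
  assert (Tal : tgt2 al = comp1 d (comp1 d1 s)) by (unfold al; rewrite hcomp_tgt, id2_tgt, TN1 by auto; auto).
  set (b1 := hcomp Th (id2 s)).
  assert (cb1 : tgt1 (src2 Th) = src1 (src2 (id2 s)))
    by (rewrite id2_src, STh, comp1_tgt; congruence).
  assert (Sb1 : src2 b1 = comp1 (comp1 d d1) s) by (unfold b1; rewrite hcomp_src, id2_src, STh by auto; auto).
  assert (Tb1 : tgt2 b1 = comp1 (comp1 d d0) s) by (unfold b1; rewrite hcomp_tgt, id2_tgt, TTh by auto; auto).
  set (b2 := hcomp (id2 d) N0).
  assert (cb2 : tgt1 (src2 (id2 d)) = src1 (src2 N0))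
    by (rewrite id2_src, SN0, comp1_src; congruence).
  assert (Sb2 : src2 b2 = comp1 d (comp1 d0 s)) by (unfold b2; rewrite hcomp_src, id2_src, SN0 by auto; auto).
  assert (Tb2 : tgt2 b2 = d) by (unfold b2; rewrite hcomp_tgt, id2_tgt, TN0 by auto; apply idr'; auto).
  set (be := vcomp b1 b2).
  assert (cbe : tgt2 b1 = src2 b2) by (rewrite Tb1, Sb2; apply comp1_assoc; congruence).
  assert (Sbe : src2 be = comp1 d (comp1 d1 s))
    by (unfold be; rewrite vcomp_src, Sb1 by auto; apply comp1_assoc; congruence).
  assert (Tbe : tgt2 be = d) by (unfold be; rewrite vcomp_tgt by auto; auto).
  set (ga := vcomp al be).
  assert (cga : tgt2 al = src2 be) by congruence.
  assert (Sga : src2 ga = d) by (unfold ga; rewrite vcomp_src by auto; auto).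
  assert (Tga : tgt2 ga = d) by (unfold ga; rewrite vcomp_tgt by auto; auto).
  destruct (Hf _ DZ) as [[GZ [_ [_ GZC]]] _].
  assert (Gga : fC GZ ga = 1%Z).
  { unfold ga. rewrite (fun_vcomp _ _ GZ al be cga). unfold be.
    rewrite (fun_vcomp _ _ GZ b1 b2 cbe). unfold al, b1, b2.
    rewrite (fun_hcomp _ _ GZ _ _ cal), (fun_hcomp _ _ GZ _ _ cb1), (fun_hcomp _ _ GZ _ _ cb2).
    rewrite !fun_id2.
    unfold N0, N1, Th. rewrite !GZC. reflexivity. }
  assert (Gid : fC GZ (id2 d) = 0%Z) by (rewrite fun_id2; reflexivity).
  assert (ne : ga <> id2 d) by (intro E; rewrite E, Gid in Gga; discriminate).
  split; [|split].
  - intros M q [HMt HM] Hfree.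
    assert (E : fA q d = fA q (comp1 d (comp1 d1 s))).
    { pose proof (free_thin M Hfree HMt (fC q al) (fC q be)) as K.
      rewrite !fun_src2, !fun_tgt2, Sal, Tal, Sbe, Tbe in K. apply K; reflexivity. }
    destruct (Hf _ Dn) as [[Gn [_ [GnA _]]] _].
    destruct (HM _ Xn_thin Gn) as [[H [_ [HA _]]] _].
    apply (f_equal (fA H)) in E. rewrite !HA in E.
    assert (c1 : tgt1 d1 = src1 s) by congruence.
    assert (c2 : tgt1 d = src1 (comp1 d1 s)) by (rewrite comp1_src; congruence).
    rewrite (fun_comp1 _ _ Gn _ _ c2), (fun_comp1 _ _ Gn _ _ c1) in E.
    unfold d, d1, s in E. rewrite !GnA in E. simpl in E. discriminate.
  - intro Ht. apply ne. apply Ht; rewrite ?id2_src, ?id2_tgt; auto.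
  - intros L r [HLt HL] Hthin.
    destruct (HL _ XZ_grp GZ) as [[H [_ [_ HC]]] _].
    assert (E : fC r ga = fC r (id2 d)).
    { apply Hthin.
      - rewrite !fun_src2, id2_src, Sga. reflexivity.
      - rewrite !fun_tgt2, id2_tgt, Tga. reflexivity. }
    apply (f_equal (fC H)) in E. rewrite !HC, Gga, Gid in E. discriminate.
Qed.
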